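(* Let $X$ be a compact Hausdorff space and let $\pi:E\to X$ be a surjection of topological spaces each of whose fibres is equipped with the discrete metric (distance $1$ between distinct points). Then $(E,X,\pi)$ is a bundle of complete metric spaces bounded by $1$ if and only if $\pi$ is a local homeomorphism (i.e. $E$ is an étale space over $X$); morphisms of such bundles are exactly continuous maps over $X$. Consequently there is an equivalence of categories $\mathrm{Sh}(X)\simeq\mathrm{LeftUlt}(X,\mathsf{Set})$ between sheaves of sets on $X$ and left ultrafunctors from $X$ to $\mathsf{Set}$.
   Context: A bundle of complete metric spaces bounded by $k$ over $X$: a surjection $\pi:E\to X$ with each fibre a complete metric space with distances $\le k$ such that (1) the global distance $d$ on $E\times_XE=\{(f,g):\pi f=\pi g\}$ (subspace topology of $E\times E$) is upper semicontinuous, i.e. $d^{-1}([0,r))$ is open for all $r$; (2) $\pi$ is continuous and open; (3) for every open $W\subseteq E$ and $f\in W$ there exist an open $V\ni f$ and $\epsilon>0$ with $V\subseteq V_\epsilon\subseteq W$, where $V_\epsilon=\{g:\exists h\in V,\pi g=\pi h,d(g,h)<\epsilon\}$. Morphisms: continuous maps over $X$ that are 1-Lipschitz on fibres. $\mathsf{Set}$ is an ultracategory with ultraproduct $\int_SM_sd\mu=\prod_sM_s/\sim$, where $(a_s)\sim(b_s)$ iff $\{s:a_s=b_s\}\in\mu$ (empty if $\{s:M_s=\emptyset\}\in\mu$). For compact Hausdorff $X$, $\int_Sx_sd\mu$ is the limit of the pushforward of $\mu$ along $s\mapsto x_s$; $\int_S\nu_sd\mu=\{B:\{s:B\in\nu_s\}\in\mu\}$.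 A left ultrafunctor from $X$ to $\mathsf{Set}$: sets $\mathcal F(x)$ and maps $\sigma_\mu:\mathcal F(\int_Sx_sd\mu)\to\int_S\mathcal F(x_s)d\mu$ for every set $S$, family $(x_s)$ and ultrafilter $\mu$ on $S$, such that $\sigma_{\delta_{s_0}}$ composed with $\int_S\mathcal F(x_s)d\delta_{s_0}\cong\mathcal F(x_{s_0})$ is the identity and $\Delta\circ\sigma_{\int_S\nu_sd\mu}=(\int_S\sigma_{\nu_s}d\mu)\circ\sigma_\mu$ with $\Delta((b_t)_t)=((b_t)_t)_s$; morphisms are families of maps $\alpha_x$ commuting with the $\sigma_\mu$. *)

(* Defs.v *)
From HB Require Import structures.
From mathcomp Require Import all_boot all_order all_algebra.
From mathcomp Require Import all_classical all_reals.
From mathcomp Require Import topology.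
From mathcomp Require Import Rstruct.
From Stdlib Require Import Rdefinitions.
Set Implicit Arguments. Unset Strict Implicit. Unset Printing Implicit Defensive.
Import Order.TTheory GRing.Theory Num.Theory.
Local Open Scope classical_set_scope.
Local Open Scope ring_scope.

Section Bundles.
Variables (X E : topologicalType) (pi : E -> X) (d : E -> E -> R).

Definition Veps (V : set E) (eps : R) : set E :=
  [set g | exists h, V h /\ pi g = pi h /\ d g h < eps].

Definition fibre_metric : Prop :=
  (forall f, d f f = 0) /\
  (forall f g, pi f = pi g -> d f g = 0 -> f = g) /\
  (forall f g, pi f = pi g -> d f g = d g f) /\
  (forall f g h, pi f = pi g -> pi g = pi h -> d f h <= d f g + d g h) /\
  (forall f g, pi f = pi g -> 0 <= d f g).

Definition fibre_complete : Prop :=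
  forall u : nat -> E, (forall n, pi (u n) = pi (u 0%N)) ->
    (forall eps : R, 0 < eps -> exists N : nat, forall n m : nat, leq N n -> leq N m ->
        d (u n) (u m) < eps) ->
    exists l, pi l = pi (u 0%N) /\
      (forall eps : R, 0 < eps -> exists N : nat, forall n : nat, leq N n -> d (u n) l < eps).

Definition fibre_bounded (k : R) : Prop :=
  forall f g, pi f = pi g -> d f g <= k.

(* (1) d : E x_X E -> R is upper semicontinuous, E x_X E carrying the
   subspace topology of E x E: each d^{-1}([0,r)) is the trace on E x_X E
   of an open subset of E x E *)
Definition dist_usc : Prop :=
  forall r : R, exists U : set (E * E), open U /\
    forall f g, pi f = pi g -> (U (f, g) <-> d f g < r).

Definition is_open_map (p : E -> X) : Prop :=
  forall W : set E, open W -> open (p @` W).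

Definition bundle_cond3 : Prop :=
  forall (W : set E) (f : E), open W -> W f ->
    exists (V : set E) (eps : R), open V /\ V f /\ 0 < eps /\
      V `<=` Veps V eps /\ Veps V eps `<=` W.

Definition is_bundle (k : R) : Prop :=
  (forall x : X, exists e, pi e = x) /\ fibre_metric /\ fibre_complete /\ fibre_bounded k /\
  dist_usc /\ (continuous pi /\ is_open_map pi) /\ bundle_cond3.
End Bundles.

Definition discrete_dist (E : Type) (f g : E) : R := if asbool (f = g) then 0 else 1.

Definition is_bundle_morphism (X E E' : topologicalType) (pi : E -> X) (pi' : E' -> X)
  (d : E -> E -> R) (d' : E' -> E' -> R) (f : E -> E') : Prop :=
  continuous f /\ (forall e, pi' (f e) = pi e) /\
  (forall a b, pi a = pi b -> d' (f a) (f b) <= d a b).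

(* local homeomorphism (etale map): continuous, and each point has an open
   neighbourhood U with pi(U) open and pi : U -> pi(U) a homeomorphism
   (injective on U and mapping open subsets of U to open sets) *)
Definition local_homeomorphism (X E : topologicalType) (pi : E -> X) : Prop :=
  continuous pi /\
  forall e : E, exists U : set E, open U /\ U e /\ open (pi @` U) /\
    {in U &, injective pi} /\
    (forall V : set E, open V -> V `<=` U -> open (pi @` V)).

Record Cat := MkCat {
  ob : Type;
  hom : ob -> ob -> Type;
  idm : forall a, hom a a;
  comp : forall a b c, hom b c -> hom a b -> hom a c }.

Record Functor (C D : Cat) := MkFunctor {
  fob : ob C -> ob D;
  fhom : forall a b, @hom C a b -> @hom D (fob a) (fob b);
  fhom_id : forall a, fhom (@idm C a) = @idm D (fob a);
  fhom_comp : forall a b c (g : @hom C b c) (f : @hom C a b),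
      fhom (comp g f) = comp (fhom g) (fhom f) }.

Definition idFunctor_ob (C : Cat) (a : ob C) := a.

Definition nat_iso (C D : Cat) (F G : ob C -> ob D)
  (Fh : forall a b, @hom C a b -> @hom D (F a) (F b))
  (Gh : forall a b, @hom C a b -> @hom D (G a) (G b)) : Prop :=
  exists (eta : forall a, @hom D (F a) (G a)) (inv : forall a, @hom D (G a) (F a)),
    (forall a, comp (eta a) (inv a) = @idm D (G a)) /\
    (forall a, comp (inv a) (eta a) = @idm D (F a)) /\
    (forall a b (f : @hom C a b), comp (eta b) (Fh a b f) = comp (Gh a b f) (eta a)).

Definition cat_equivalent (C D : Cat) : Prop :=
  exists (F : Functor C D) (G : Functor D C),
    @nat_iso C C (fun a => fob G (fob F a)) (@idFunctor_ob C)
      (fun a b f => fhom G (fhom F f)) (fun a b f => f) /\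
    @nat_iso D D (fun a => fob F (fob G a)) (@idFunctor_ob D)
      (fun a b f => fhom F (fhom G f)) (fun a b f => f).

Section Sheaves.
Variable X : topologicalType.

Definition opens := {U : set X | open U}.
Definition opI (U V : opens) : opens := exist _ (proj1_sig U `&` proj1_sig V)
  (openI (proj2_sig U) (proj2_sig V)).

Record sheaf := MkSheaf {
  sec : opens -> Type;
  res : forall U V : opens, proj1_sig V `<=` proj1_sig U -> sec U -> sec V;
  res_id : forall U (s : sec U), res (@subset_refl _ (proj1_sig U)) s = s;
  res_comp : forall U V W (h1 : proj1_sig V `<=` proj1_sig U)
      (h2 : proj1_sig W `<=` proj1_sig V) (s : sec U),
      res h2 (res h1 s) = res (subset_trans h2 h1) s;
  gluing : forall (I : Type) (U : opens) (Ui : I -> opens)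
      (hsub : forall i, proj1_sig (Ui i) `<=` proj1_sig U),
      proj1_sig U `<=` \bigcup_i proj1_sig (Ui i) ->
      forall s : forall i, sec (Ui i),
      (forall i j, @res (Ui i) (opI (Ui i) (Ui j))
                       (@subIsetl _ (proj1_sig (Ui i)) (proj1_sig (Ui j))) (s i)
                 = @res (Ui j) (opI (Ui i) (Ui j))
                       (@subIsetr _ (proj1_sig (Ui i)) (proj1_sig (Ui j))) (s j)) ->
      exists! t : sec U, forall i, @res U (Ui i) (hsub i) t = s i }.

Definition sheaf_hom (P Q : sheaf) :=
  {a : forall U, sec P U -> sec Q U |
     forall U V (h : proj1_sig V `<=` proj1_sig U) (s : sec P U),
       a V (res h s) = res h (a U s)}.

Definition sheaf_id (P : sheaf) : sheaf_hom P P.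
Proof. by exists (fun U s => s). Defined.

Definition sheaf_comp (P Q T : sheaf) (b : sheaf_hom Q T) (a : sheaf_hom P Q) :
  sheaf_hom P T.
Proof.
exists (fun U s => proj1_sig b U (proj1_sig a U s)).
by move=> U V h s; rewrite (proj2_sig a) (proj2_sig b).
Defined.

Definition Sh : Cat := @MkCat sheaf sheaf_hom sheaf_id sheaf_comp.
End Sheaves.

Definition delta (S : Type) (s0 : S) : set_system S := [set B | B s0].

Definition uint (S T : Type) (mu : set_system S) (nu : S -> set_system T) :
  set_system T := [set B | mu [set s | nu s B]].

(* Elements of the product are represented by
   families defined on a mu-large set (partial families), so that the
   ultraproduct is empty exactly when {s | M_s = emptyset} \in mu; two
   families are identified when they agree (and are defined) mu-a.e.  An
   element of the ultraproduct is an equivalence class. *)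
Section Ultraproduct.
Variables (S : Type) (M : S -> Type) (mu : set_system S).
Definition pfam := forall s, option (M s).
Definition mdef (p : pfam) : Prop := mu [set s | p s <> None].
Definition uagree (p q : pfam) : Prop := mu [set s | p s <> None /\ p s = q s].
Definition is_uclass (C : set pfam) : Prop :=
  exists p, mdef p /\ C = [set q | uagree p q].
Definition ultraprod := {C : set pfam | is_uclass C}.
End Ultraproduct.

Definition umap_set (S : Type) (M N : S -> Type) (mu : set_system S)
  (f : forall s, M s -> N s) (C : set (pfam M)) : set (pfam N) :=
  [set q | exists p, C p /\ mu [set s | exists a, p s = Some a /\ q s = Some (f s a)]].

(* Delta : \int_T M_t d(\int nu_s dmu) -> \int_S (\int_T M_t dnu_s) dmu,
   [(b_t)_t] |-> [([(b_t)_t]_{nu_s})_s], on classes *)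
Definition Delta_set (S T : Type) (M : T -> Type) (mu : set_system S)
  (nu : S -> set_system T) (C : set (pfam M)) :
  set (pfam (fun s : S => ultraprod M (nu s))) :=
  [set q | exists b, C b /\
     mu [set s | exists c : ultraprod M (nu s), q s = Some c /\ proj1_sig c b]].

Section LeftUlt.
Variable X : topologicalType.

(* x is \int_S x_s dmu: the pushforward of mu along s |-> x_s converges to x *)
Definition ulim (S : Type) (mu : set_system S) (xs : S -> X) (x : X) : Prop :=
  nbhs x `<=` [set A | mu (xs @^-1` A)].

Record left_ultrafunctor := MkLU {
  LUF : X -> Type;
  sigma : forall (S : Type) (mu : set_system S), UltraFilter mu ->
    forall (xs : S -> X) (x : X), ulim mu xs x ->
    LUF x -> ultraprod (fun s => LUF (xs s)) mu;
  sigma_delta : forall (S : Type) (s0 : S) (hU : UltraFilter (delta s0))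
    (xs : S -> X) (h : ulim (delta s0) xs (xs s0)) (a : LUF (xs s0)),
    exists p, proj1_sig (sigma hU h a) p /\ p s0 = Some a;
  sigma_assoc : forall (S T : Type) (mu : set_system S) (hmu : UltraFilter mu)
    (nu : S -> set_system T) (hnu : forall s, UltraFilter (nu s))
    (hU : UltraFilter (uint mu nu))
    (xs : T -> X) (ys : S -> X) (x : X)
    (hs : forall s, ulim (nu s) xs (ys s)) (h2 : ulim mu ys x)
    (h1 : ulim (uint mu nu) xs x) (a : LUF x),
    @Delta_set S T (fun t => LUF (xs t)) mu nu (proj1_sig (sigma hU h1 a)) =
    umap_set mu (fun s (b : LUF (ys s)) => sigma (hnu s) (hs s) b)
             (proj1_sig (sigma hmu h2 a)) }.

Definition LU_hom (F G : left_ultrafunctor) :=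
  {al : forall x, LUF F x -> LUF G x |
    forall (S : Type) (mu : set_system S) (hU : UltraFilter mu)
      (xs : S -> X) (x : X) (h : ulim mu xs x) (a : LUF F x),
      umap_set mu (fun s => al (xs s)) (proj1_sig (sigma hU h a)) =
      proj1_sig (sigma hU h (al x a))}.

Lemma umap_id_class (S : Type) (M : S -> Type) (mu : set_system S)
  (hF : Filter mu) (C : set (pfam M)) : is_uclass mu C ->
  umap_set mu (fun s (a : M s) => a) C = C.
Proof.
move=> [p [_ ->]]; rewrite /umap_set /uagree; apply/seteqP; split => q /=.
- move=> [r [Hr Hm]]; apply: filterS (filterI Hr Hm) => s [[Hs1 Hs2] [a [Ha Hq]]].
  by split => //; rewrite Hs2 Ha Hq.
- move=> Hq; exists q; split => //; apply: filterS Hq => s [Hs1 Hs2] /=.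
  move: Hs1; rewrite Hs2; case: (q s) => [a _|//]; by exists a; split.
Qed.

Lemma umap_comp_class (S : Type) (M N K : S -> Type) (mu : set_system S)
  (hF : Filter mu) (f : forall s, M s -> N s) (g : forall s, N s -> K s)
  (C : set (pfam M)) : is_uclass mu C ->
  umap_set mu g (umap_set mu f C) = umap_set mu (fun s a => g s (f s a)) C.
Proof.
move=> [p [_ ->]]; rewrite /umap_set /uagree; apply/seteqP; split => q /=.
- move=> [r [[p' [Hp' Hm1]] Hm2]]; exists p'; split => //.
  apply: filterS (filterI Hm1 Hm2) => s [[a [Ha Hr]] [b [Hb Hq]]].
  by move: Hb Hq; rewrite Hr => -[<-] Hq; exists a.
- move=> [p' [Hp' Hm]].
  exists (fun s => match p' s with Some a => Some (f s a) | None => None end).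
  split.
  + exists p'; split => //; apply: filterS Hm => s [a [Ha _]].
    by exists a; rewrite Ha.
  + apply: filterS Hm => s [a [Ha Hq]]; exists (f s a); by rewrite Ha.
Qed.

Definition LU_id (F : left_ultrafunctor) : LU_hom F F.
Proof.
exists (fun x a => a) => S mu hU xs x h a.
exact: (umap_id_class _ (proj2_sig (sigma hU h a))).
Defined.

Definition LU_comp (F G H : left_ultrafunctor) (be : LU_hom G H) (al : LU_hom F G) :
  LU_hom F H.
Proof.
exists (fun x a => proj1_sig be x (proj1_sig al x a)) => S mu hU xs x h a.
rewrite -(@umap_comp_class _ _ _ _ mu _ (fun s => proj1_sig al (xs s))
  (fun s => proj1_sig be (xs s)) _ (proj2_sig (sigma hU h a))).
by rewrite (proj2_sig al) (proj2_sig be).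
Defined.

Definition LeftUlt : Cat := @MkCat left_ultrafunctor LU_hom LU_id LU_comp.
End LeftUlt.

(* Main.v *)
Require Import Defs.
From mathcomp Require Import all_boot all_order all_algebra.
From mathcomp Require Import all_classical all_reals topology Rstruct.
From Stdlib Require Import Rdefinitions.
Set Implicit Arguments. Unset Strict Implicit. Unset Printing Implicit Defensive.
Import Order.TTheory GRing.Theory Num.Theory.
Local Open Scope classical_set_scope.
Local Open Scope ring_scope.


Lemma dd_eq (E : Type) (f g : E) : f = g -> discrete_dist f g = GRing.zero R.
Proof. by move=> ->; rewrite /discrete_dist asboolT. Qed.
Lemma dd_neq (E : Type) (f g : E) : f <> g -> discrete_dist f g = GRing.one R.
Proof. by move=> h; rewrite /discrete_dist asboolF. Qed.
Lemma dd_small (E : Type) (f g : E) (r : R) : r <= 1 -> discrete_dist f g < r -> f = g.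
Proof.
move=> hr h; case: (pselect (f = g)) => // hfg.
move: h; rewrite (dd_neq hfg) => h; have := lt_le_trans h hr; by rewrite ltxx.
Qed.
Lemma dd_ge0 (E : Type) (f g : E) : 0 <= discrete_dist f g.
Proof. by case: (pselect (f = g)) => h; [rewrite (dd_eq h)|rewrite (dd_neq h)]. Qed.
Lemma dd_le1 (E : Type) (f g : E) : discrete_dist f g <= 1.
Proof. by case: (pselect (f = g)) => h; [rewrite (dd_eq h)|rewrite (dd_neq h)]. Qed.

Lemma open_setX (T U : topologicalType) (A : set T) (B : set U) :
  open A -> open B -> open (A `*` B).
Proof.
move=> oA oB; rewrite openE => -[a b] [/= Aa Bb].
exists (A, B) => //=; split; [exact: open_nbhs_nbhs | exact: open_nbhs_nbhs].
Qed.

Section Part1.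
Variables (X E : topologicalType) (pi : E -> X).

Lemma bundle_etale : is_bundle pi (@discrete_dist E) 1 -> local_homeomorphism pi.
Proof.
move=> [_ [_ [_ [_ [usc [[cpi opi] _]]]]]].
split => // e.
have [U0 [oU0 HU0]] := usc 1.
have h12 : (1 : R) <= 1 by [].
have U0e : U0 (e, e) by apply/(HU0 e e erefl); rewrite dd_eq //; exact: ltr01.
have : nbhs (e, e) U0 by apply: open_nbhs_nbhs.
move=> [[A B] /= [nA nB] sAB].
exists (A° `&` B°); split; first exact: openI (open_interior _) (open_interior _).
split; first by split; apply: nbhs_singleton; apply: nbhs_interior.
have oW : forall V : set E, open V -> open (pi @` V) by exact: opi.
split; first by apply: oW; exact: openI (open_interior _) (open_interior _).
split; last by move=> V oV _; exact: oW.
move=> f g; rewrite !inE => -[Af _] [_ Bg] pfg.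
apply: (dd_small h12); apply/(HU0 f g pfg)/sAB; split.
- exact: interior_subset.
- exact: interior_subset.
Qed.

Lemma etale_bundle : (forall x : X, exists e, pi e = x) ->
  local_homeomorphism pi -> is_bundle pi (@discrete_dist E) 1.
Proof.
move=> surj [cpi lh].
have [Uf HUf] := choice lh.
have opi : is_open_map pi.
  move=> W oW.
  have -> : pi @` W = \bigcup_(e in W) pi @` (W `&` Uf e).
    apply/seteqP; split => y.
    - move=> [e We <-]; exists e => //; exists e => //; split => //.
      by have [_ [? _]] := HUf e.
    - by move=> [e _ [f [Wf _] <-]]; exists f.
  apply: bigcup_open => e _; have [oU [_ [_ [_ h]]]] := HUf e.
  apply: h; [exact: openI|exact: subIsetr].
split => //; split.
  split; first by move=> f; rewrite dd_eq.
  split.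
    move=> f g _; case: (pselect (f = g)) => // h; rewrite (dd_neq h) => /eqP.
    by rewrite oner_eq0.
  split.
    move=> f g _; case: (pselect (f = g)) => [->//|h].
    by rewrite (dd_neq h) dd_neq // => /esym.
  split.
    move=> f g h _ _; case: (pselect (f = g)) => [<-|h1].
      by rewrite (@dd_eq _ f f erefl) add0r.
    rewrite (dd_neq h1); apply: le_trans (dd_le1 _ _) _; rewrite lerDl; exact: dd_ge0.
  by move=> f g _; exact: dd_ge0.
split.
  move=> u hu0 cau; have [N HN] := cau 1 ltr01.
  exists (u N); split; first exact: hu0.
  move=> eps eps0; exists N => n hn.
  by rewrite (dd_small (lexx 1) (HN n N hn (leqnn N))) dd_eq.
split; first by move=> f g _; exact: dd_le1.
split.
  move=> r; case: (lerP r 0) => hr0.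
    exists set0; split; first exact: open0.
    move=> f g _; split => // h; have := lt_le_trans h hr0.
    by rewrite ltNge dd_ge0.
  case: (lerP r 1) => hr1.
    exists (\bigcup_(e in setT) (Uf e `*` Uf e)); split.
      apply: bigcup_open => e _; have [oU _] := HUf e; exact: open_setX.
    move=> f g pfg; split.
      move=> [e _ [/= Uff Ufg]]; have [_ [_ [_ [inj _]]]] := HUf e.
      by rewrite (inj f g) ?inE // dd_eq.
    move=> /(dd_small hr1) <-; exists f => //; have [_ [? _]] := HUf f; by split.
  exists setT; split; first exact: openT.
  move=> f g _; split => // _; exact: le_lt_trans (dd_le1 _ _) hr1.
split; first by [].
move=> W f oW Wf; exists W, 1; split => //; split => //; split; first exact: ltr01.
split.
  move=> g Wg; exists g; split => //; split => //; rewrite dd_eq //; exact: ltr01.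
by move=> g [h [Wh [_ /(dd_small (lexx 1)) ->]]].
Qed.

End Part1.

Lemma part2 (X E E' : topologicalType) (pi : E -> X) (pi' : E' -> X) (f : E -> E') :
  is_bundle_morphism pi pi' (@discrete_dist E) (@discrete_dist E') f <->
  (continuous f /\ forall e : E, pi' (f e) = pi e).
Proof.
split; first by move=> [? [? _]].
move=> [cf hf]; split => //; split => // a b _.
case: (pselect (a = b)) => [->|h]; first by rewrite !dd_eq.
by rewrite (dd_neq h) dd_le1.
Qed.


Lemma ultra_of (T : Type) (F : set_system T) : ProperFilter F ->
  (forall A, F A \/ F (~` A)) -> UltraFilter F.
Proof.
move=> PF h; split => // G PG FG; apply/seteqP; split => // A GA.
case: (h A) => // /FG GnA.
have : G (A `&` ~` A) by exact: filterI.
by rewrite setICr => /filter_not_empty.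
Qed.

Lemma ultra_eq (T : Type) (F G : set_system T) : UltraFilter F -> ProperFilter G ->
  F `<=` G -> F = G.
Proof. by move=> UF PG FG; rewrite (max_filter PG FG). Qed.

Lemma delta_ultra (S : Type) (s0 : S) : UltraFilter (delta s0).
Proof.
apply: ultra_of; last by move=> A; rewrite /delta /=; case: (pselect (A s0)); [left|right].
split; first by rewrite /delta /=.
split; rewrite /delta //=.
by move=> A B AB ?; exact: AB.
Qed.

Lemma uint_proper (S T : Type) (mu : set_system S) (nu : S -> set_system T) :
  ProperFilter mu -> (forall s, ProperFilter (nu s)) -> ProperFilter (uint mu nu).
Proof.
move=> Pm Pn; split.
  rewrite /uint /= => h; have : mu set0.
    by apply: filterS h => s /filter_not_empty.
  exact: filter_not_empty.
split; rewrite /uint /=.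
- by apply: (@filterS _ mu _ _ _ _ (@filterT _ mu _)) => s _; apply: (@filterT _ _ (@filter_filter _ _ (Pn s))).
- move=> A B hA hB; apply: (@filterS _ mu _ _ _ _ (@filterI _ mu _ _ _ hA hB)) => s [? ?].
  exact: (@filterI _ _ (@filter_filter _ _ (Pn s))).
- move=> A B AB h; apply: (@filterS _ mu _ _ _ _ h) => s; exact: (@filterS _ _ (@filter_filter _ _ (Pn s))).
Qed.

Lemma uint_ultra (S T : Type) (mu : set_system S) (nu : S -> set_system T) :
  UltraFilter mu -> (forall s, UltraFilter (nu s)) -> UltraFilter (uint mu nu).
Proof.
move=> Um Un; apply: ultra_of; first by apply: uint_proper => // s; exact: ultra_proper.
move=> A; rewrite /uint /=.
case: (in_ultra_setVsetC [set s | nu s A] Um) => h; [left|right] => //.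
apply: filterS h => s /= nA; case: (in_ultra_setVsetC A (Un s)) => // hA.
Qed.

Section UP.
Variables (S : Type) (M : S -> Type) (mu : set_system S).
Hypothesis hF : Filter mu.

Definition class_of (p : pfam M) : set (pfam M) := [set q | uagree mu p q].

Lemma uagree_sym (p q : pfam M) : uagree mu p q -> uagree mu q p.
Proof. by apply: filterS => s [h e]; split; rewrite -e. Qed.

Lemma uagree_trans (p q r : pfam M) : uagree mu p q -> uagree mu q r -> uagree mu p r.
Proof.
move=> h1 h2; apply: filterS (filterI h1 h2) => s [[h e] [h' e']]; split => //.
by rewrite e.
Qed.

Lemma uagree_refl (p : pfam M) : mdef mu p -> uagree mu p p.
Proof. by apply: filterS => s h; split. Qed.

Lemma uagree_mdef (p q : pfam M) : uagree mu p q -> mdef mu p.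
Proof. by apply: filterS => s []. Qed.

Lemma class_ex (C : set (pfam M)) : is_uclass mu C -> exists p, C p.
Proof. by move=> [p [hp ->]]; exists p; exact: uagree_refl. Qed.

Lemma class_agree (C : set (pfam M)) (p q : pfam M) : is_uclass mu C -> C p -> uagree mu p q -> C q.
Proof. by move=> [p0 [_ ->]] h1 h2; exact: uagree_trans h1 h2. Qed.

Lemma class_agree2 (C : set (pfam M)) (p q : pfam M) : is_uclass mu C -> C p -> C q -> uagree mu p q.
Proof. by move=> [p0 [_ ->]] h1 h2; exact: uagree_trans (uagree_sym h1) h2. Qed.

Lemma class_mdef (C : set (pfam M)) (p : pfam M) : is_uclass mu C -> C p -> mdef mu p.
Proof. by move=> hC Cp; apply: (@uagree_mdef p p); exact: (class_agree2 hC Cp Cp). Qed.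

Lemma mem_class (C : set (pfam M)) (p : pfam M) : is_uclass mu C -> C p -> C = class_of p.
Proof.
move=> hC Cp; apply/seteqP; split => q.
- by move=> Cq; exact: class_agree2 hC Cp Cq.
- by move=> h; exact: class_agree hC Cp h.
Qed.

Lemma class_of_is (p : pfam M) : mdef mu p -> is_uclass mu (class_of p).
Proof. by move=> h; exists p. Qed.

Lemma class_mem (p : pfam M) : mdef mu p -> class_of p p.
Proof. exact: uagree_refl. Qed.

Lemma class_of_eq (p q : pfam M) : uagree mu p q -> class_of p = class_of q.
Proof.
move=> h; apply/seteqP; split => r /= hr.
- exact: uagree_trans (uagree_sym h) hr.
- exact: uagree_trans h hr.
Qed.

Lemma class_common (C D : set (pfam M)) (p : pfam M) : is_uclass mu C -> is_uclass mu D -> C p -> D p -> C = D.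
Proof. by move=> hC hD Cp Dp; rewrite (mem_class hC Cp) (mem_class hD Dp). Qed.

Definition mkclass (p : pfam M) (hp : mdef mu p) : ultraprod M mu :=
  exist _ (class_of p) (class_of_is hp).

Lemma uprod_eq (c d : ultraprod M mu) : proj1_sig c = proj1_sig d -> c = d.
Proof.
case: c d => [c hc] [d hd] /= e; subst d; congr exist; exact: Prop_irrelevance.
Qed.

End UP.

Definition fmapp (S : Type) (M N : S -> Type) (f : forall s, M s -> N s) (p : pfam M) :
  pfam N := fun s => match p s with Some a => Some (f s a) | None => None end.

Lemma umap_class (S : Type) (M N : S -> Type) (mu : set_system S) (hF : Filter mu)
  (f : forall s, M s -> N s) (p : pfam M) : mdef mu p ->
  umap_set mu f (class_of mu p) = class_of mu (fmapp f p).
Proof.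
move=> hp; apply/seteqP; split => q.
- move=> [p' [hp' hm]]; apply: filterS (filterI hp' hm) => s [[h1 e] [a [ha hq]]].
  by rewrite /fmapp /= e ha hq.
- move=> hq; exists p; split; first exact: class_mem.
  apply: filterS hq => s; rewrite /fmapp /=; case: (p s) => [a|] /= [h <-].
    by exists a.
  by case: h.
Qed.

Lemma umap_mem (S : Type) (M N : S -> Type) (mu : set_system S) (hF : Filter mu)
  (f : forall s, M s -> N s) (C : set (pfam M)) (p : pfam M) :
  is_uclass mu C -> C p -> umap_set mu f C (fmapp f p).
Proof.
move=> hC Cp; have hp := class_mdef hF hC Cp.
rewrite (mem_class hF hC Cp) umap_class //; apply: class_mem => //.
by apply: filterS hp => s; rewrite /fmapp /=; case: (p s).
Qed.

Lemma uint_filter (S T : Type) (mu : set_system S) (nu : S -> set_system T) :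
  Filter mu -> (forall s, Filter (nu s)) -> Filter (uint mu nu).
Proof.
move=> Fm Fn; split; rewrite /uint /=.
- by apply: (@filterS _ mu _ _ _ _ (@filterT _ mu _)) => s _; apply: (@filterT _ _ (Fn s)).
- move=> A B hA hB; apply: (@filterS _ mu _ _ _ _ (@filterI _ mu _ _ _ hA hB)) => s [? ?].
  exact: (@filterI _ _ (Fn s)).
- move=> A B AB h; apply: (@filterS _ mu _ _ _ _ h) => s; exact: (@filterS _ _ (Fn s)).
Qed.

Lemma Delta_class (S T : Type) (M : T -> Type) (mu : set_system S)
  (nu : S -> set_system T) (hF : Filter mu) (hn : forall s, Filter (nu s))
  (C : set (pfam M)) (b : pfam M) (q0 : pfam (fun s => ultraprod M (nu s))) :
  is_uclass (uint mu nu) C -> C b ->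
  mu [set s | exists c, q0 s = Some c /\ proj1_sig c b] ->
  Delta_set mu (nu:=nu) C = class_of mu q0.
Proof.
move=> hC Cb h0; have hU := uint_filter hF hn.
apply/seteqP; split => q.
- move=> [b' [Cb' hm]].
  have hab := class_agree2 hU hC Cb Cb'.
  apply: filterS (filterI h0 (filterI hm hab)) => s [[c0 [e0 m0]] [[c [e m]] hs]].
  rewrite /= e0 e; split => //; congr Some; apply: uprod_eq.
  apply: (class_common (hn s) (proj2_sig c0) (proj2_sig c) _ m).
  exact: (class_agree (hn s) (proj2_sig c0) m0 hs).
- move=> hq; exists b; split => //.
  apply: filterS (filterI h0 hq) => s [[c [e m]] [_ e2]]; exists c.
  by rewrite -e2 e.
Qed.

Lemma ulim_open (X : topologicalType) (S : Type) (mu : set_system S) (xs : S -> X) x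
  (O : set X) : ulim mu xs x -> open O -> O x -> mu [set s | O (xs s)].
Proof. by move=> h oO Ox; apply: h; exact: open_nbhs_nbhs. Qed.

Lemma ultra_nbhs (X : topologicalType) (x : X) (B : set X) :
  (forall N, nbhs x N -> exists z, N z /\ B z) ->
  exists nu : set_system X, UltraFilter nu /\ ulim nu id x /\ nu B.
Proof.
move=> hB.
pose G := [set A : set X | exists N, nbhs x N /\ N `&` B `<=` A].
have PG : ProperFilter G.
  split.
    move=> [N [nN sN]]; have [z [Nz Bz]] := hB N nN; exact: (sN z).
  split.
  - by exists setT; split => //; exact: filterT.
  - move=> A1 A2 [N1 [n1 s1]] [N2 [n2 s2]]; exists (N1 `&` N2); split.
      exact: filterI.
    by move=> z [[z1 z2] bz]; split; [apply: s1|apply: s2].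
  - by move=> A1 A2 s [N [nN sN]]; exists N; split => // z hz; apply: s; apply: sN.
have [nu [Unu Gnu]] := ultraFilterLemma PG.
exists nu; split => //; split.
- by move=> A nA; apply: Gnu; exists A; split => // z [].
- by apply: Gnu; exists setT; split; [exact: filterT| move=> z []].
Qed.

Lemma nbhs_open_sub (X : topologicalType) (x : X) (A : set X) :
  nbhs x A -> exists O, open O /\ O x /\ O `<=` A.
Proof. by rewrite nbhsE => -[O [oO Ox] sO]; exists O. Qed.

Lemma tail_ultra (T : Type) (nu : set_system T) : ProperFilter nu ->
  exists Mu : set_system {D : set T | nu D}, UltraFilter Mu /\
    forall D0, nu D0 -> Mu [set D | proj1_sig D `<=` D0].
Proof.
move=> Pn.
pose G := [set P : set {D : set T | nu D} | exists D0, nu D0 /\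
  forall D : {D : set T | nu D}, proj1_sig D `<=` D0 -> P D].
have PG : ProperFilter G.
  split.
    by move=> [D0 [nD0 h]]; exact: (h (exist _ D0 nD0)).
  split.
  - by exists setT; split => //; exact: filterT.
  - move=> A1 A2 [D1 [n1 s1]] [D2 [n2 s2]]; exists (D1 `&` D2); split.
      exact: filterI.
    by move=> D hD; split; [apply: s1|apply: s2] => z /hD [].
  - by move=> A1 A2 s [D0 [nD0 sD]]; exists D0; split => // D hD; apply: s; apply: sD.
have [Mu [UM GM]] := ultraFilterLemma PG.
exists Mu; split => // D0 nD0; apply: GM; exists D0; split => //.
Qed.


Section LUlem.
Variables (X : topologicalType) (F : left_ultrafunctor X).

Lemma sigma_irr (S : Type) (mu mu' : set_system S) (e : mu = mu')
  (hU : UltraFilter mu) (hU' : UltraFilter mu') (xs : S -> X) (x : X)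
  (h : ulim mu xs x) (h' : ulim mu' xs x) (a : LUF F x) :
  proj1_sig (sigma hU h a) = proj1_sig (sigma hU' h' a).
Proof.
subst mu'; rewrite (Prop_irrelevance hU hU') (Prop_irrelevance h h'); reflexivity.
Qed.

Lemma ufilter (T : Type) (mu : set_system T) : UltraFilter mu -> Filter mu.
Proof. by move=> [[]]. Qed.

Lemma sig_const (S : Type) (mu : set_system S) (hU : UltraFilter mu) (x : X)
  (h : ulim mu (fun _ : S => x) x) (a : LUF F x) :
  proj1_sig (sigma hU h a) (fun _ => Some a).
Proof.
have Fm := ufilter hU.
pose nu := fun _ : S => delta tt.
have hnu : forall s, UltraFilter (nu s) := fun _ => delta_ultra tt.
have hUi : UltraFilter (uint mu nu) := uint_ultra hU hnu.
have hs : forall s, ulim (nu s) (fun _ : unit => x) ((fun _ : S => x) s).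
  by move=> s A nA; exact: nbhs_singleton nA.
have h1 : ulim (uint mu nu) (fun _ : unit => x) x.
  by move=> A nA; rewrite /uint /=; apply: filterS filterT => s _; exact: nbhs_singleton nA.
have E := sigma_assoc hU hnu hUi hs h h1 a.
have eqd : uint mu nu = delta tt.
  apply/funext => B; apply/propext; rewrite /uint /delta /=; split.
  - move=> hB; apply: contrapT => nB.
    by apply: (@filter_not_empty _ mu (ultra_proper)); apply: filterS hB => s.
  - by move=> hB; apply: filterS filterT => s _.
have hd : ulim (delta tt) (fun _ : unit => x) ((fun _ : unit => x) tt).
  by move=> A nA; exact: nbhs_singleton nA.
have [p [Pp ptt]] := sigma_delta (delta_ultra tt) hd a.
rewrite (sigma_irr eqd hUi (delta_ultra tt) h1 hd) in E.
have [p0 Cp0] := class_ex Fm (proj2_sig (sigma hU h a)).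
have := umap_mem Fm (fun s c => sigma (hnu s) (hs s) c) (proj2_sig (sigma hU h a)) Cp0.
rewrite -E => -[b' [Cb' hm]].
have hpb := class_agree2 (ufilter (delta_ultra tt)) (proj2_sig _) Pp Cb'.
move: hpb; rewrite /uagree /delta /= => -[_]; rewrite ptt => hb'.
apply: (class_agree Fm (proj2_sig _) Cp0).
apply: filterS hm => s [c]; rewrite /fmapp /=.
case E0 : (p0 s) => [e|]; last by move=> [].
move=> [[<-] hc]; split => //.
have [pe [Pe pett]] := sigma_delta (hnu s) (hs s) e.
have := class_agree2 (ufilter (hnu s)) (proj2_sig _) Pe hc.
by rewrite /uagree /nu /delta /= pett -hb' => -[_ ->].
Qed.

Lemma sig_push (S : Type) (mu : set_system S) (hU : UltraFilter mu) (xs : S -> X)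
  (y : X) (h : ulim mu xs y) (a : LUF F y) (b : pfam (fun z : X => LUF F z)) :
  (forall (hU' : UltraFilter (uint mu (fun s => delta (xs s))))
     (h' : ulim (uint mu (fun s => delta (xs s))) id y),
     proj1_sig (sigma hU' h' a) b) ->
  proj1_sig (sigma hU h a) (fun s => b (xs s)).
Proof.
move=> Hb; have Fm := ufilter hU.
pose nu := fun s => delta (xs s).
have hnu : forall s, UltraFilter (nu s) := fun s => delta_ultra (xs s).
have hUi : UltraFilter (uint mu nu) := uint_ultra hU hnu.
have hs : forall s, ulim (nu s) id (xs s).
  by move=> s A nA; exact: nbhs_singleton nA.
have h1 : ulim (uint mu nu) id y by exact: h.
have E := sigma_assoc hU hnu hUi hs h h1 a.
have hb := Hb hUi h1.
have [p0 Cp0] := class_ex Fm (proj2_sig (sigma hU h a)).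
have := umap_mem Fm (fun s c => sigma (hnu s) (hs s) c) (proj2_sig (sigma hU h a)) Cp0.
rewrite -E => -[b' [Cb' hm]].
have hab := class_agree2 (ufilter hUi) (proj2_sig _) hb Cb'.
apply: (class_agree Fm (proj2_sig _) Cp0).
have hab' : mu [set s | b (xs s) <> None /\ b (xs s) = b' (xs s)] := hab.
apply: filterS (filterI hm hab') => s [[c]]; rewrite /fmapp /=.
case E0 : (p0 s) => [e|]; last by move=> [].
move=> [[<-] hc] [hb1 hb2].
have [pe [Pe pett]] := sigma_delta (hnu s) (hs s) e.
have := class_agree2 (ufilter (hnu s)) (proj2_sig _) Pe hc.
rewrite /uagree /nu /delta /= pett => -[_ e2].
by rewrite hb2 -e2.
Qed.

End LUlem.


Section Stalk.
Variables (X : topologicalType) (P : sheaf X).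

Lemma res_irr (U V : opens X) (h h' : proj1_sig V `<=` proj1_sig U) (s : sec P U) :
  res h s = res h' s.
Proof. by rewrite (Prop_irrelevance h h'). Qed.

Lemma res_res (U V W : opens X) (h1 : proj1_sig V `<=` proj1_sig U)
  (h2 : proj1_sig W `<=` proj1_sig V) (h3 : proj1_sig W `<=` proj1_sig U) (s : sec P U) :
  res h2 (res h1 s) = res h3 s.
Proof. by rewrite res_comp; exact: res_irr. Qed.

Lemma res_refl (U : opens X) (h : proj1_sig U `<=` proj1_sig U) (s : sec P U) :
  res h s = s.
Proof. by rewrite (res_irr h (@subset_refl _ _)) res_id. Qed.

Record gpair (x : X) := GP { gU : opens X; gx : proj1_sig gU x; gs : sec P gU }.

Definition geq (x : X) (p q : gpair x) : Prop :=
  exists W : opens X, proj1_sig W x /\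
    exists (h1 : proj1_sig W `<=` proj1_sig (gU p)) (h2 : proj1_sig W `<=` proj1_sig (gU q)),
      res h1 (gs p) = res h2 (gs q).

Lemma geq_refl x (p : gpair x) : geq p p.
Proof. exists (gU p); split; first exact: gx. by exists (@subset_refl _ _), (@subset_refl _ _). Qed.

Lemma geq_sym x (p q : gpair x) : geq p q -> geq q p.
Proof. by move=> [W [Wx [h1 [h2 e]]]]; exists W; split => //; exists h2, h1. Qed.

Lemma geq_trans x (p q r : gpair x) : geq p q -> geq q r -> geq p r.
Proof.
move=> [W1 [W1x [h1 [h2 e1]]]] [W2 [W2x [h3 [h4 e2]]]].
exists (opI W1 W2); split; first by split.
have s1 : proj1_sig (opI W1 W2) `<=` proj1_sig W1 by exact: subIsetl.
have s2 : proj1_sig (opI W1 W2) `<=` proj1_sig W2 by exact: subIsetr.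
exists (subset_trans s1 h1), (subset_trans s2 h4).
have s3 : proj1_sig (opI W1 W2) `<=` proj1_sig (gU q) by exact: subset_trans s1 h2.
transitivity (res s1 (res h1 (gs p))); first by symmetry; exact: res_res.
rewrite e1 (res_res _ _ s3) -(res_res h3 s2 s3) e2; exact: res_res.
Qed.

Definition stalk (x : X) := {C : set (gpair x) | exists p, C = geq p}.

Definition germ x (p : gpair x) : stalk x := exist _ (geq p) (ex_intro _ p erefl).

Lemma germ_eq x (p q : gpair x) : germ p = germ q <-> geq p q.
Proof.
split.
- move=> e; have e' := congr1 (@proj1_sig _ _) e; simpl in e'.
  rewrite e'; exact: geq_refl.
- move=> h; apply: eq_exist_uncurried; rewrite /=.
  have e : geq p = geq q.
    apply/funext => r; apply/propext; split => hr.
    - exact: geq_trans (geq_sym h) hr.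
    - exact: geq_trans h hr.
  by exists e; exact: Prop_irrelevance.
Qed.

Lemma germ_surj x (g : stalk x) : exists p, g = germ p.
Proof.
case: g => C [p e]; exists p; subst C; congr exist; exact: Prop_irrelevance.
Qed.

Definition rep x (g : stalk x) : gpair x := proj1_sig (cid (germ_surj g)).
Lemma germ_rep x (g : stalk x) : g = germ (rep g).
Proof. exact: (proj2_sig (cid (germ_surj g))). Qed.

Lemma gpair_eta x (p : gpair x) : p = GP (gx p) (gs p).
Proof. by case: p. Qed.

Lemma germ_res x (U V : opens X) (h : proj1_sig V `<=` proj1_sig U) (hv : proj1_sig V x)
  (hu : proj1_sig U x) (t : sec P U) : germ (GP hv (res h t)) = germ (GP hu t).
Proof.
apply/germ_eq; exists V; split => //; exists (@subset_refl _ _), h => /=.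
exact: res_refl.
Qed.

Lemma germ_GP_irr x (U : opens X) (h h' : proj1_sig U x) (t : sec P U) :
  germ (GP h t) = germ (GP h' t).
Proof. by rewrite (Prop_irrelevance h h'). Qed.

Definition Pfam (S : Type) (xs : S -> X) (U : opens X) (t : sec P U) :
  pfam (fun s => stalk (xs s)) :=
  fun s => match pselect (proj1_sig U (xs s)) with
           | left h => Some (germ (GP h t)) | right _ => None end.

Lemma Pfam_in (S : Type) (xs : S -> X) (U : opens X) (t : sec P U) s
  (h : proj1_sig U (xs s)) : Pfam xs t s = Some (germ (GP h t)).
Proof. rewrite /Pfam; case: pselect => [h'|//]; by rewrite (Prop_irrelevance h' h). Qed.

Lemma Pfam_out (S : Type) (xs : S -> X) (U : opens X) (t : sec P U) s :
  ~ proj1_sig U (xs s) -> Pfam xs t s = None.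
Proof. by rewrite /Pfam; case: pselect. Qed.

Lemma Pfam_mdef (S : Type) (mu : set_system S) (xs : S -> X) (x : X)
  (U : opens X) (t : sec P U) : Filter mu -> ulim mu xs x -> proj1_sig U x ->
  mdef mu (Pfam xs t).
Proof.
move=> Fm h hx; apply: filterS (ulim_open h (proj2_sig U) hx) => s /= hs.
by rewrite (Pfam_in t hs).
Qed.

Lemma Pfam_agree (S : Type) (mu : set_system S) (xs : S -> X) (x : X)
  (U U' : opens X) (hx : proj1_sig U x) (hx' : proj1_sig U' x) (t : sec P U)
  (t' : sec P U') : Filter mu -> ulim mu xs x -> geq (GP hx t) (GP hx' t') ->
  uagree mu (Pfam xs t) (Pfam xs t').
Proof.
move=> Fm h [W [Wx [h1 [h2 e]]]].
apply: filterS (ulim_open h (proj2_sig W) Wx) => s /= hs.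
rewrite (Pfam_in t (h1 _ hs)) (Pfam_in t' (h2 _ hs)); split => //.
congr Some; apply/germ_eq; exists W; split => //; by exists h1, h2.
Qed.

Definition sig_st (S : Type) (mu : set_system S) (hU : UltraFilter mu) (xs : S -> X)
  (x : X) (h : ulim mu xs x) (g : stalk x) : ultraprod (fun s => stalk (xs s)) mu :=
  mkclass (Pfam_mdef (gs (rep g)) (ufilter hU) h (gx (rep g))).

Lemma sig_st_rep (S : Type) (mu : set_system S) (hU : UltraFilter mu) (xs : S -> X)
  (x : X) (h : ulim mu xs x) (g : stalk x) (U : opens X) (hx : proj1_sig U x)
  (t : sec P U) : g = germ (GP hx t) ->
  proj1_sig (sig_st hU h g) = class_of mu (Pfam xs t).
Proof.
move=> eg; rewrite /sig_st /mkclass /=; apply: (class_of_eq (ufilter hU)).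
apply: (Pfam_agree (hx := gx (rep g)) (ufilter hU) h); rewrite -gpair_eta.
by apply/germ_eq; rewrite -germ_rep.
Qed.

End Stalk.

Section StalkLU.
Variables (X : topologicalType) (P : sheaf X).

Lemma germ_rep_eta x (g : stalk P x) : g = germ (GP (gx (rep g)) (gs (rep g))).
Proof. by rewrite -gpair_eta; exact: germ_rep. Qed.

Lemma stalk_delta (S : Type) (s0 : S) (hU : UltraFilter (delta s0)) (xs : S -> X)
  (h : ulim (delta s0) xs (xs s0)) (a : stalk P (xs s0)) :
  exists p, proj1_sig (sig_st hU h a) p /\ p s0 = Some a.
Proof.
have ea := germ_rep_eta a.
exists (Pfam xs (gs (rep a))); split.
- rewrite (sig_st_rep hU h ea); apply: (class_mem (ufilter hU)).
  exact: (Pfam_mdef _ (ufilter hU) h (gx (rep a))).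
- by rewrite (Pfam_in _ (gx (rep a))) -ea.
Qed.

Lemma stalk_assoc (S T : Type) (mu : set_system S) (hmu : UltraFilter mu)
  (nu : S -> set_system T) (hnu : forall s, UltraFilter (nu s))
  (hU : UltraFilter (uint mu nu)) (xs : T -> X) (ys : S -> X) (x : X)
  (hs : forall s, ulim (nu s) xs (ys s)) (h2 : ulim mu ys x)
  (h1 : ulim (uint mu nu) xs x) (a : stalk P x) :
  Delta_set mu (nu:=nu) (proj1_sig (sig_st hU h1 a)) =
  umap_set mu (fun s b => sig_st (hnu s) (hs s) b) (proj1_sig (sig_st hmu h2 a)).
Proof.
have Fm := ufilter hmu.
have Fn : forall s, Filter (nu s) := fun s => ufilter (hnu s).
have ea := germ_rep_eta a.
set U := gU (rep a) in ea *; set t := gs (rep a) in ea *.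
have hx : proj1_sig U x := gx (rep a).
have ea' : a = germ (GP hx t) by rewrite ea; exact: germ_GP_irr.
pose q0 : pfam (fun s => ultraprod (fun t => stalk P (xs t)) (nu s)) :=
  fun s => match pselect (proj1_sig U (ys s)) with
           | left hy => Some (mkclass (Pfam_mdef t (Fn s) (hs s) hy))
           | right _ => None end.
have q0_in : forall s (hy : proj1_sig U (ys s)),
    q0 s = Some (mkclass (Pfam_mdef t (Fn s) (hs s) hy)).
  move=> s hy; rewrite /q0; case: pselect => [hy'|//].
  by rewrite (Prop_irrelevance hy' hy).
have hUx := ulim_open h2 (proj2_sig U) hx.
rewrite (sig_st_rep hU h1 ea') (sig_st_rep hmu h2 ea').
rewrite (umap_class Fm _ (Pfam_mdef t Fm h2 hx)).
rewrite (@Delta_class _ _ _ mu nu Fm Fn _ (Pfam xs t) q0).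
- apply: class_of_eq => //; apply: filterS hUx => s /= hy.
  rewrite /fmapp (Pfam_in t hy) (q0_in s hy); split => //; congr Some.
  apply: uprod_eq => /=; symmetry; exact: (sig_st_rep (hnu s) (hs s) (erefl (germ (GP hy t)))).
- exact: (class_of_is (Pfam_mdef t (uint_filter Fm Fn) h1 hx)).
- exact: (class_mem (uint_filter Fm Fn) (Pfam_mdef t (uint_filter Fm Fn) h1 hx)).
- apply: filterS hUx => s /= hy; rewrite (q0_in s hy); eexists; split; first by [].
  exact: (class_mem (Fn s) (Pfam_mdef t (Fn s) (hs s) hy)).
Qed.

Definition stalkLU : left_ultrafunctor X :=
  @MkLU X (stalk P) (fun S mu hU xs x h g => sig_st hU h g) stalk_delta stalk_assoc.

End StalkLU.

Lemma LU_hom_eq (X : topologicalType) (F G : left_ultrafunctor X) (al be : LU_hom F G) :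
  proj1_sig al = proj1_sig be -> al = be.
Proof. case: al be => [a ha] [b hb] /= e; subst b; congr exist; exact: Prop_irrelevance. Qed.

Lemma sheaf_hom_eq (X : topologicalType) (P Q : sheaf X) (al be : sheaf_hom P Q) :
  proj1_sig al = proj1_sig be -> al = be.
Proof. case: al be => [a ha] [b hb] /= e; subst b; congr exist; exact: Prop_irrelevance. Qed.

Section Smap.
Variables (X : topologicalType) (P Q : sheaf X) (a : sheaf_hom P Q).

Definition smap (x : X) (g : stalk P x) : stalk Q x :=
  germ (GP (gx (rep g)) (proj1_sig a _ (gs (rep g)))).

Lemma smap_germ (x : X) (U : opens X) (hx : proj1_sig U x) (t : sec P U) :
  smap (germ (GP hx t)) = germ (GP hx (proj1_sig a U t)).
Proof.
apply/germ_eq; have := germ_rep (germ (GP hx t)); move/esym/germ_eq.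
move=> [W [Wx [h1 [h2 e]]]]; exists W; split => //; exists h1, h2 => /=.
by rewrite -!(proj2_sig a) /= e.
Qed.

Lemma smap_hom (S : Type) (mu : set_system S) (hU : UltraFilter mu) (xs : S -> X) (x : X)
  (h : ulim mu xs x) (g : stalk P x) :
  umap_set mu (fun s => @smap (xs s)) (proj1_sig (sig_st hU h g)) =
  proj1_sig (sig_st hU h (smap g)).
Proof.
have Fm := ufilter hU.
have eg := germ_rep_eta g.
have eg' : smap g = germ (GP (gx (rep g)) (proj1_sig a _ (gs (rep g)))) by [].
rewrite (sig_st_rep hU h eg) (sig_st_rep hU h eg').
rewrite (umap_class Fm _ (Pfam_mdef _ Fm h (gx (rep g)))); congr class_of.
apply: functional_extensionality_dep => s; rewrite /fmapp /Pfam.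
by case: pselect => // hs; rewrite smap_germ.
Qed.

Definition smapLU : LU_hom (stalkLU P) (stalkLU Q) := exist _ smap smap_hom.

End Smap.

Section FunF.
Variable X : topologicalType.

Lemma smap_id (P : sheaf X) : smapLU (sheaf_id P) = LU_id (stalkLU P).
Proof.
apply: LU_hom_eq; apply: functional_extensionality_dep => x /=.
by apply: funext => g; rewrite /smap /= -germ_rep_eta.
Qed.

Lemma smap_comp (P Q T : sheaf X) (b : sheaf_hom Q T) (a : sheaf_hom P Q) :
  smapLU (sheaf_comp b a) = LU_comp (smapLU b) (smapLU a).
Proof.
apply: LU_hom_eq; apply: functional_extensionality_dep => x /=.
apply: funext => g; rewrite /=.
change (smap a g) with (germ (GP (gx (rep g)) (proj1_sig a _ (gs (rep g))))).
by rewrite smap_germ.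
Qed.

Definition FunF : Functor (Sh X) (LeftUlt X) :=
  @MkFunctor (Sh X) (LeftUlt X) (@stalkLU X) (@smapLU X) smap_id smap_comp.

End FunF.


Section SecG.
Variables (X : topologicalType) (F : left_ultrafunctor X).

Definition fam (U : set X) (s : forall y, U y -> LUF F y) (S : Type) (xs : S -> X) :
  pfam (fun i => LUF F (xs i)) :=
  fun i => match pselect (U (xs i)) with left h => Some (s (xs i) h) | right _ => None end.

Lemma fam_in (U : set X) (s : forall y, U y -> LUF F y) (S : Type) (xs : S -> X) i
  (h : U (xs i)) : fam s xs i = Some (s (xs i) h).
Proof. rewrite /fam; case: pselect => [h'|//]; by rewrite (Prop_irrelevance h' h). Qed.

Definition compat (U : set X) (s : forall y, U y -> LUF F y) : Prop :=
  forall (S : Type) (mu : set_system S) (hU : UltraFilter mu) (xs : S -> X) (y : X)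
    (hy : U y) (h : ulim mu xs y), proj1_sig (sigma hU h (s y hy)) (fam s xs).

Definition secG (U : opens X) := {s : forall y, proj1_sig U y -> LUF F y | compat s}.

Lemma secG_eq (U : opens X) (s1 s2 : secG U) :
  (forall y hy, proj1_sig s1 y hy = proj1_sig s2 y hy) -> s1 = s2.
Proof.
case: s1 s2 => [f1 c1] [f2 c2] /= e.
have ef : f1 = f2.
  apply: functional_extensionality_dep => y; apply: functional_extensionality_dep => hy.
  exact: e.
subst f2; congr exist; exact: Prop_irrelevance.
Qed.

Lemma fam_agree (U V : set X) (s : forall y, U y -> LUF F y) (t : forall y, V y -> LUF F y)
  (S : Type) (mu : set_system S) (xs : S -> X) (W : set X) :
  Filter mu -> mu [set i | W (xs i)] -> W `<=` U -> W `<=` V ->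
  (forall z (hu : U z) (hv : V z), W z -> s z hu = t z hv) ->
  uagree mu (fam s xs) (fam t xs).
Proof.
move=> Fm hW WU WV e; apply: filterS hW => i /= hi.
rewrite (fam_in s (WU _ hi)) (fam_in t (WV _ hi)); split => //.
by congr Some; exact: e.
Qed.

Lemma resG_compat (U V : opens X) (hVU : proj1_sig V `<=` proj1_sig U) (s : secG U) :
  compat (fun y (hy : proj1_sig V y) => proj1_sig s y (hVU y hy)).
Proof.
move=> S mu hU xs y hy h.
have Fm := ufilter hU.
apply: (class_agree Fm (proj2_sig _) (proj2_sig s S mu hU xs y (hVU y hy) h)).
apply: (fam_agree Fm (ulim_open h (proj2_sig V) hy) hVU (@subset_refl _ _)).
by move=> z hu hv _; rewrite (Prop_irrelevance hu (hVU z hv)).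
Qed.

Definition resG (U V : opens X) (hVU : proj1_sig V `<=` proj1_sig U) (s : secG U) :
  secG V := exist _ _ (resG_compat hVU s).

Lemma resG_id (U : opens X) (s : secG U) : resG (@subset_refl _ (proj1_sig U)) s = s.
Proof. by apply: secG_eq => y hy /=; congr (proj1_sig s y); exact: Prop_irrelevance. Qed.

Lemma resG_comp (U V W : opens X) (h1 : proj1_sig V `<=` proj1_sig U)
  (h2 : proj1_sig W `<=` proj1_sig V) (s : secG U) :
  resG h2 (resG h1 s) = resG (subset_trans h2 h1) s.
Proof. by apply: secG_eq => y hy /=; congr (proj1_sig s y); exact: Prop_irrelevance. Qed.

Lemma resG_glue (I : Type) (U : opens X) (Ui : I -> opens X)
  (hsub : forall i, proj1_sig (Ui i) `<=` proj1_sig U) :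
  proj1_sig U `<=` \bigcup_i proj1_sig (Ui i) ->
  forall s : forall i, secG (Ui i),
  (forall i j, @resG (Ui i) (opI (Ui i) (Ui j)) (@subIsetl _ (proj1_sig (Ui i)) (proj1_sig (Ui j))) (s i)
             = @resG (Ui j) (opI (Ui i) (Ui j)) (@subIsetr _ (proj1_sig (Ui i)) (proj1_sig (Ui j))) (s j)) ->
  exists! t : secG U, forall i, resG (hsub i) t = s i.
Proof.
move=> hcov s hs.
have ov : forall i j z (hi : proj1_sig (Ui i) z) (hj : proj1_sig (Ui j) z),
    proj1_sig (s i) z hi = proj1_sig (s j) z hj.
  move=> i j z hi hj; have := congr1 (fun r => proj1_sig r z (conj hi hj)) (hs i j).
  rewrite /= => e; rewrite (Prop_irrelevance hi (subIsetl (conj hi hj))).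
  by rewrite e; congr (proj1_sig (s j) z); exact: Prop_irrelevance.
have ex : forall y, proj1_sig U y -> exists i, proj1_sig (Ui i) y.
  by move=> y /hcov [i _ hi]; exists i.
pose idx y hy := proj1_sig (cid (ex y hy)).
have idx_spec : forall y hy, proj1_sig (Ui (idx y hy)) y.
  by move=> y hy; exact: (proj2_sig (cid (ex y hy))).
pose t0 := fun y (hy : proj1_sig U y) => proj1_sig (s (idx y hy)) y (idx_spec y hy).
have ct : compat t0.
  move=> S mu hU xs y hy h; have Fm := ufilter hU.
  pose i := idx y hy.
  have := proj2_sig (s i) S mu hU xs y (idx_spec y hy) h.
  rewrite /t0 -/i => C.
  apply: (class_agree Fm (proj2_sig _) C).
  apply: (fam_agree Fm (ulim_open h (proj2_sig (Ui i)) (idx_spec y hy)) (@subset_refl _ _) (hsub i)).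
  by move=> z hu hv _; rewrite /t0 (ov _ (idx z hv) z hu (idx_spec z hv)).
exists (exist _ t0 ct); split.
  move=> i; apply: secG_eq => y hy /=; rewrite /t0; exact: ov.
move=> t' ht'; apply: secG_eq => y hy /=; rewrite /t0.
have := congr1 (fun r => proj1_sig r y (idx_spec y hy)) (ht' (idx y hy)).
rewrite /= => <-; congr (proj1_sig t' y); exact: Prop_irrelevance.
Qed.

Definition sheafG : sheaf X := @MkSheaf X secG resG resG_id resG_comp resG_glue.

End SecG.

Section MapG.
Variables (X : topologicalType) (F G : left_ultrafunctor X) (al : LU_hom F G).

Lemma mapG_compat (U : opens X) (s : secG F U) :
  compat (fun y (hy : proj1_sig U y) => proj1_sig al y (proj1_sig s y hy)).
Proof.
move=> S mu hU xs y hy h; have Fm := ufilter hU.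
rewrite -(proj2_sig al).
have := umap_mem Fm (fun i => proj1_sig al (xs i)) (proj2_sig _) (proj2_sig s S mu hU xs y hy h).
congr umap_set; apply: functional_extensionality_dep => i.
by rewrite /fmapp /fam; case: pselect.
Qed.

Definition mapG_fun (U : opens X) (s : secG F U) : secG G U := exist _ _ (mapG_compat s).

Definition mapG : sheaf_hom (sheafG F) (sheafG G).
Proof. exists mapG_fun => U V h s; exact: secG_eq. Defined.

End MapG.

Section FunG.
Variable X : topologicalType.

Lemma mapG_id (F : left_ultrafunctor X) : mapG (LU_id F) = sheaf_id (sheafG F).
Proof.
apply: sheaf_hom_eq; apply: functional_extensionality_dep => U.
by apply: funext => s; exact: secG_eq.
Qed.

Lemma mapG_comp (F G H : left_ultrafunctor X) (b : LU_hom G H) (a : LU_hom F G) :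
  mapG (LU_comp b a) = sheaf_comp (mapG b) (mapG a).
Proof.
apply: sheaf_hom_eq; apply: functional_extensionality_dep => U.
by apply: funext => s; exact: secG_eq.
Qed.

Definition FunG : Functor (LeftUlt X) (Sh X) :=
  @MkFunctor (LeftUlt X) (Sh X) (@sheafG X) (@mapG X) mapG_id mapG_comp.

End FunG.


Section IsoSh.
Variables (X : topologicalType) (P : sheaf X).

Lemma germsec_compat (U : opens X) (t : sec P U) :
  compat (F := stalkLU P) (fun y (hy : proj1_sig U y) => germ (GP hy t)).
Proof.
move=> S mu hU xs y hy h.
have e := sig_st_rep hU h (erefl (germ (GP hy t))).
have m := class_mem (ufilter hU) (Pfam_mdef t (ufilter hU) h hy).
rewrite -e in m; exact: m.
Qed.

Definition germsec (U : opens X) (t : sec P U) : secG (stalkLU P) U :=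
  exist _ _ (germsec_compat t).

Definition invS : sheaf_hom P (sheafG (stalkLU P)).
Proof.
exists germsec => U V h t; apply: secG_eq => y hy /=; exact: germ_res.
Defined.

Lemma sheaf_loc (U : opens X) (t1 t2 : sec P U) :
  (forall y (hy : proj1_sig U y), germ (GP hy t1) = germ (GP hy t2)) -> t1 = t2.
Proof.
move=> e.
pose I := {y : X | proj1_sig U y}.
have ex : forall i : I, exists W : opens X, proj1_sig W (proj1_sig i) /\
    exists (h1 : proj1_sig W `<=` proj1_sig U), res h1 t1 = res h1 t2.
  move=> [y hy] /=; have /germ_eq [W [Wy [h1 [h2 ew]]]] := e y hy.
  by exists W; split => //; exists h1; rewrite ew (Prop_irrelevance h1 h2).
pose Ui (i : I) := proj1_sig (cid (ex i)).
have hsub : forall i, proj1_sig (Ui i) `<=` proj1_sig U.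
  by move=> i; have [_ [h1 _]] := proj2_sig (cid (ex i)).
have hcov : proj1_sig U `<=` \bigcup_i proj1_sig (Ui i).
  move=> y hy; exists (exist _ y hy) => //.
  by have [? _] := proj2_sig (cid (ex (exist _ y hy))).
have hov : forall i j, res (V := opI (Ui i) (Ui j)) (@subIsetl _ (proj1_sig (Ui i)) (proj1_sig (Ui j)))
      (res (hsub i) t1) = res (V := opI (Ui i) (Ui j)) (@subIsetr _ (proj1_sig (Ui i)) (proj1_sig (Ui j)))
      (res (hsub j) t1).
  by move=> i j; rewrite !res_comp; exact: res_irr.
have [t [_ ut]] := gluing hsub hcov hov.
have e1 : t = t1 by apply: ut.
rewrite -e1; apply: ut => i; have [_ [h1 e2]] := proj2_sig (cid (ex i)).
by rewrite (Prop_irrelevance (hsub i) h1) e2.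
Qed.

Lemma glue_local (U : opens X) (g : secG (stalkLU P) U) (y : X) (hy : proj1_sig U y) :
  exists W : opens X, proj1_sig W y /\ proj1_sig W `<=` proj1_sig U /\
    exists tW : sec P W, forall z (hz : proj1_sig W z) (hzU : proj1_sig U z),
      germ (GP hz tW) = proj1_sig g z hzU.
Proof.
set r := rep (proj1_sig g y hy).
set V := gU r; set t := gs r.
have ey : proj1_sig g y hy = germ (GP (gx r) t) by exact: germ_rep_eta.
have [N [nN HN]] : exists N, nbhs y N /\ forall z (hz : proj1_sig U z)
    (hv : proj1_sig V z), N z -> proj1_sig g z hz = germ (GP hv t).
  apply: contrapT => H.
  pose B := [set z | exists (hz : proj1_sig U z) (hv : proj1_sig V z),
                 proj1_sig g z hz <> germ (GP hv t)].
  have hB : forall N, nbhs y N -> exists z, N z /\ B z.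
    move=> N nN; apply: contrapT => hn; apply: H.
    exists (N `&` proj1_sig U `&` proj1_sig V); split.
      apply: filterI; first apply: filterI => //.
      - exact: open_nbhs_nbhs (conj (proj2_sig U) hy).
      - exact: open_nbhs_nbhs (conj (proj2_sig V) (gx r)).
    move=> z hz hv [[Nz _] _]; apply: contrapT => ne; apply: hn; exists z; split => //.
    by exists hz, hv.
  have [nu [Unu [hnu Bnu]]] := ultra_nbhs hB.
  have Fn := ufilter Unu.
  have := proj2_sig g X nu Unu id y hy hnu.
  move=> hm; have e := sig_st_rep Unu hnu ey.
  have hag : class_of nu (Pfam id t) (fam (proj1_sig g) id) by rewrite -e.
  have : nu set0.
    apply: filterS (filterI hag Bnu) => z [[_ e1] [hz [hv ne]]].
    by apply: ne; move: e1; rewrite (Pfam_in (xs := id) (s := z) t hv) (fam_in (xs := id) (i := z) _ hz) => -[->].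
  by apply: (@filter_not_empty _ nu (ultra_proper)).
have nW : nbhs y (N `&` proj1_sig U `&` proj1_sig V).
  apply: filterI; first apply: filterI => //.
  - exact: open_nbhs_nbhs (conj (proj2_sig U) hy).
  - exact: open_nbhs_nbhs (conj (proj2_sig V) (gx r)).
pose W : opens X := exist _ _ (open_interior (N `&` proj1_sig U `&` proj1_sig V)).
have WV : proj1_sig W `<=` proj1_sig V by move=> z /interior_subset [].
exists W; split; first exact: nbhs_singleton (nbhs_interior nW).
split; first by move=> z /interior_subset [[]].
exists (res WV t) => z hz hzU.
rewrite (germ_res _ _ (WV z hz)); symmetry; apply: HN.
by have [[]] := interior_subset hz.
Qed.

Lemma glue_ex (U : opens X) (g : secG (stalkLU P) U) :
  exists t : sec P U, forall y (hy : proj1_sig U y), germ (GP hy t) = proj1_sig g y hy.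
Proof.
pose I := {y : X | proj1_sig U y}.
pose ex := fun i : I => glue_local g (proj2_sig i).
pose Ui (i : I) := proj1_sig (cid (ex i)).
have hsub : forall i, proj1_sig (Ui i) `<=` proj1_sig U.
  by move=> i; have [_ [h1 _]] := proj2_sig (cid (ex i)).
have hi : forall i : I, proj1_sig (Ui i) (proj1_sig i).
  by move=> i; have [h1 _] := proj2_sig (cid (ex i)).
have ex2 : forall i : I, exists tW : sec P (Ui i), forall z (hz : proj1_sig (Ui i) z)
    (hzU : proj1_sig U z), germ (GP hz tW) = proj1_sig g z hzU.
  by move=> i; have [_ [_ h]] := proj2_sig (cid (ex i)).
pose s (i : I) := proj1_sig (cid (ex2 i)).
have hs : forall i z (hz : proj1_sig (Ui i) z) (hzU : proj1_sig U z),
    germ (GP hz (s i)) = proj1_sig g z hzU.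
  by move=> i; exact: (proj2_sig (cid (ex2 i))).
have hcov : proj1_sig U `<=` \bigcup_i proj1_sig (Ui i).
  by move=> y hy; exists (exist _ y hy) => //; exact: (hi (exist _ y hy)).
have hov : forall i j, res (V := opI (Ui i) (Ui j)) (@subIsetl _ (proj1_sig (Ui i)) (proj1_sig (Ui j)))
      (s i) = res (V := opI (Ui i) (Ui j)) (@subIsetr _ (proj1_sig (Ui i)) (proj1_sig (Ui j)))
      (s j).
  move=> i j; apply: sheaf_loc => z hz.
  rewrite (germ_res _ _ (proj1 hz)) (germ_res _ _ (proj2 hz)).
  by rewrite (hs i z _ (hsub i z (proj1 hz))) (hs j z _ (hsub i z (proj1 hz))).
have [t [ht _]] := gluing hsub hcov hov.
exists t => y hy; pose i : I := exist _ y hy.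
rewrite -(germ_res (hsub i) (hi i)) ht; exact: hs.
Qed.

Definition etaS_fun (U : opens X) (g : secG (stalkLU P) U) : sec P U :=
  proj1_sig (cid (glue_ex g)).

Lemma etaS_spec (U : opens X) (g : secG (stalkLU P) U) y (hy : proj1_sig U y) :
  germ (GP hy (etaS_fun g)) = proj1_sig g y hy.
Proof. exact: (proj2_sig (cid (glue_ex g))). Qed.

Definition etaS : sheaf_hom (sheafG (stalkLU P)) P.
Proof.
exists etaS_fun => U V h g; apply: sheaf_loc => y hy.
etransitivity; first exact: (etaS_spec (resG h g) hy).
by rewrite (germ_res h hy (h y hy)) etaS_spec.
Defined.

End IsoSh.

Lemma isoSh (X : topologicalType) :
  @nat_iso (Sh X) (Sh X) (fun a => fob (FunG X) (fob (FunF X) a)) (@idFunctor_ob (Sh X))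
      (fun a b f => fhom (FunG X) (fhom (FunF X) f)) (fun a b f => f).
Proof.
exists (@etaS X), (@invS X); split; [|split].
- move=> P; apply: sheaf_hom_eq; apply: functional_extensionality_dep => U.
  apply: funext => t /=; apply: sheaf_loc => y hy.
  by rewrite etaS_spec.
- move=> P; apply: sheaf_hom_eq; apply: functional_extensionality_dep => U.
  apply: funext => g /=; apply: secG_eq => y hy /=; exact: etaS_spec.
- move=> P Q f; apply: sheaf_hom_eq; apply: functional_extensionality_dep => U.
  apply: funext => g /=; apply: sheaf_loc => y hy.
  rewrite etaS_spec /= -smap_germ etaS_spec //.
Qed.


Section LocSect.
Variables (X : topologicalType) (F : left_ultrafunctor X) (x : X) (a : LUF F x).

Definition pdom (b : pfam (fun z : X => LUF F z)) : set X := [set z | b z <> None].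

Definition valid (b : pfam (fun z : X => LUF F z)) : Prop :=
  forall (nu : set_system X) (hnu : UltraFilter nu) (h : ulim nu id x),
    nu (pdom b) -> proj1_sig (sigma hnu h a) b.

Lemma valid0 : valid (fun _ => None).
Proof.
move=> nu hnu h hd; exfalso.
apply: (@filter_not_empty _ nu (ultra_proper)); apply: filterS hd => z /=.
by move=> hz; exact: hz.
Qed.

Definition pjoin (b1 b2 : pfam (fun z : X => LUF F z)) : pfam (fun z : X => LUF F z) :=
  fun z => match b1 z with Some e => Some e | None => b2 z end.

Lemma valid_join b1 b2 : valid b1 -> valid b2 -> valid (pjoin b1 b2).
Proof.
move=> v1 v2 nu hnu h hd; have Fn := ufilter hnu.
case: (in_ultra_setVsetC (pdom b1) hnu) => [h1|h1].
- apply: (class_agree Fn (proj2_sig _) (v1 nu hnu h h1)).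
  apply: filterS h1 => z; rewrite /pdom /pjoin /=; case: (b1 z) => //.
- have h2 : nu (pdom b2).
    apply: filterS (filterI hd h1) => z; rewrite /pdom /pjoin /=.
    case: (b1 z) => [e [_ H]|[]] //; exfalso; apply: H => E; inversion E.
  apply: (class_agree Fn (proj2_sig _) (v2 nu hnu h h2)).
  apply: filterS (filterI h1 h2) => z; rewrite /pdom /pjoin /=.
  case: (b1 z) => [e [H _]|[]] //; exfalso; apply: H => E; inversion E.
Qed.

Lemma claim1 (nu : set_system X) (hnu : UltraFilter nu) (h : ulim nu id x) :
  exists b, valid b /\ nu (pdom b).
Proof.
apply: contrapT => H.
have Fn := ufilter hnu.
have [b Cb] := class_ex Fn (proj2_sig (sigma hnu h a)).
have db : nu (pdom b) := class_mdef Fn (proj2_sig _) Cb.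
pose Ix := {D : set X | nu D}.
pose restr (D : set X) : pfam (fun z : X => LUF F z) :=
  fun z => if pselect (D z) then b z else None.
have restr_in : forall D z, D z -> restr D z = b z.
  by move=> D z Dz; rewrite /restr; case: pselect.
have restr_sub : forall D, pdom (restr D) `<=` D.
  by move=> D z; rewrite /pdom /restr /=; case: pselect.
have restr_dom : forall D, nu D -> nu (pdom (restr D)).
  move=> D nD; apply: filterS (filterI nD db) => z [Dz bz].
  by rewrite /pdom /restr /=; case: pselect.
have nv : forall D : Ix, exists nu' : set_system X, UltraFilter nu' /\ ulim nu' id x /\
    nu' (pdom (restr (proj1_sig D))) /\
    forall (hU' : UltraFilter nu') (h' : ulim nu' id x),
      ~ proj1_sig (sigma hU' h' a) (restr (proj1_sig D)).
  move=> [D nD]; apply: contrapT => hn; apply: H; exists (restr D); split.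
    move=> nu' hU' h' hd'; apply: contrapT => hm; apply: hn.
    exists nu'; split => //; split => //; split => // hU'' h'' hm''; apply: hm.
    by rewrite (sigma_irr erefl hU' hU'' h' h'').
  exact: restr_dom.
pose nuD (D : Ix) := proj1_sig (cid (nv D)).
have hnuD : forall D, UltraFilter (nuD D).
  by move=> D; have [? _] := proj2_sig (cid (nv D)).
have hsD : forall D : Ix, ulim (nuD D) id ((fun _ => x) D).
  by move=> D; have [_ [? _]] := proj2_sig (cid (nv D)).
have ndD : forall D, nuD D (pdom (restr (proj1_sig D))).
  by move=> D; have [_ [_ [? _]]] := proj2_sig (cid (nv D)).
have nmD : forall D (hU' : UltraFilter (nuD D)) (h' : ulim (nuD D) id x),
    ~ proj1_sig (sigma hU' h' a) (restr (proj1_sig D)).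
  by move=> D; have [_ [_ [_ ?]]] := proj2_sig (cid (nv D)).
have [Mu [UM tailM]] := tail_ultra (@ultra_proper _ _ hnu).
have FM := ufilter UM.
have eqn : nu = uint Mu nuD.
  apply: (ultra_eq hnu (uint_proper (@ultra_proper _ _ UM) (fun D => @ultra_proper _ _ (hnuD D)))).
  move=> E nE; rewrite /uint /=; apply: filterS (tailM E nE) => D /= hD.
  apply: filterS (ndD D) => z hz; apply: hD; exact: restr_sub hz.
have hUi : UltraFilter (uint Mu nuD) := uint_ultra UM hnuD.
have h2 : ulim Mu (fun _ => x) x.
  move=> A nA; apply: (@filterS _ Mu FM _ _ _ (@filterT _ Mu FM)) => D _ /=; exact: nbhs_singleton nA.
have h1 : ulim (uint Mu nuD) id x by rewrite -eqn.
have E := sigma_assoc UM hnuD hUi hsD h2 h1 a.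
have hc := sig_const UM h2 a.
have := umap_mem FM (fun D c => sigma (hnuD D) (hsD D) c) (proj2_sig _) hc.
rewrite -E => -[b' [Cb' hm]].
rewrite (sigma_irr (esym eqn) hUi hnu h1 h) in Cb'.
have hab := class_agree2 Fn (proj2_sig _) Cb Cb'.
have hab' : Mu [set D | nuD D [set z | b z <> None /\ b z = b' z]].
  by move: hab; rewrite /uagree eqn.
have : Mu set0.
  apply: filterS (filterI hm hab') => D [[c [ec mc]] hD].
  move: ec; rewrite /fmapp => -[ec]; subst c.
  apply: (nmD D (hnuD D) (hsD D)).
  apply: (class_agree (ufilter (hnuD D)) (proj2_sig _) mc).
  have DD : nuD D (proj1_sig D) by apply: filterS (ndD D); exact: restr_sub.
  apply: filterS (filterI hD DD) => z [[nb e] Dz].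
  by rewrite /= restr_in // -e.
move=> h0; exact: (@filter_not_empty _ Mu (@ultra_proper _ _ UM) h0).
Qed.

Lemma claimZ : exists b, valid b /\ nbhs x (pdom b).
Proof.
apply: contrapT => H.
pose Z := [set Zs : set X | exists b, valid b /\ exists N, nbhs x N /\ N `\` pdom b `<=` Zs].
have PZ : ProperFilter Z.
  split.
    move=> [b [vb [N [nN sN]]]]; apply: H; exists b; split => //.
    apply: filterS nN => z Nz; apply: contrapT => nd; exact: (sN z (conj Nz nd)).
  split.
  - exists (fun _ => None); split; first exact: valid0.
    by exists setT; split => //; exact: filterT.
  - move=> A1 A2 [b1 [v1 [N1 [n1 s1]]]] [b2 [v2 [N2 [n2 s2]]]].
    exists (pjoin b1 b2); split; first exact: valid_join.
    exists (N1 `&` N2); split; first exact: filterI.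
    move=> z [[z1 z2] nd]; rewrite /pdom /pjoin /= in nd.
    split; [apply: s1|apply: s2]; split => //; rewrite /pdom /=.
    + move: nd; case: (b1 z) => [e nd|_ h]; [exact: nd|exact: h].
    + move: nd; case: (b1 z) => [e nd|nd //]; exfalso; apply: nd => E; inversion E.
  - by move=> A1 A2 s [b [vb [N [nN sN]]]]; exists b; split => //; exists N; split => // z /sN /s.
have [nu [Unu Znu]] := ultraFilterLemma PZ.
have hnu : ulim nu id x.
  move=> A nA; apply: Znu; exists (fun _ => None); split; first exact: valid0.
  by exists A; split => // z [].
have [b [vb db]] := claim1 Unu hnu.
have : nu (~` pdom b).
  apply: Znu; exists b; split => //; exists setT; split; first exact: filterT.
  by move=> z [].
move=> ndb; apply: (@filter_not_empty _ nu (@ultra_proper _ _ Unu)).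
by rewrite -(setICr (pdom b)); exact: (@filterI _ nu (ufilter Unu) _ _ db ndb).
Qed.

Lemma valid_at (b : pfam (fun z : X => LUF F z)) : valid b -> nbhs x (pdom b) ->
  b x = Some a.
Proof.
move=> vb nb.
have hd : ulim (delta x) id (id x) by move=> A nA; exact: nbhs_singleton nA.
have m := vb (delta x) (delta_ultra x) hd (nbhs_singleton nb).
have [p [Pp px]] := sigma_delta (delta_ultra x) hd a.
have := class_agree2 (ufilter (delta_ultra x)) (proj2_sig _) Pp m.
by rewrite /uagree /delta /= px => -[_ <-].
Qed.

Definition good (b : pfam (fun z : X => LUF F z)) (y : X) : Prop :=
  exists e : LUF F y, b y = Some e /\ forall (nu : set_system X) (hnu : UltraFilter nu)
    (h : ulim nu id y), proj1_sig (sigma hnu h e) b.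

Lemma extension (b : pfam (fun z : X => LUF F z)) : valid b -> nbhs x (pdom b) ->
  exists N, nbhs x N /\ forall y, N y -> good b y.
Proof.
move=> vb nb; apply: contrapT => H.
pose B := pdom b `&` [set z | ~ good b z].
have hB : forall N, nbhs x N -> exists z, N z /\ B z.
  move=> N nN; apply: contrapT => hn; apply: H; exists (N `&` pdom b); split.
    exact: filterI.
  move=> y [Ny dy]; apply: contrapT => ng; apply: hn; exists y; split => //.
have [Mu [UMu [hMu BMu]]] := ultra_nbhs hB.
have FMu := ufilter UMu.
have spec : forall z, exists nu : set_system X, UltraFilter nu /\ ulim nu id z /\
    (B z -> exists e, b z = Some e /\ exists (hU' : UltraFilter nu) (h' : ulim nu id z),
       ~ proj1_sig (sigma hU' h' e) b).
  move=> z; case: (pselect (B z)) => Bz; last first.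
    exists (delta z); split; first exact: delta_ultra.
    by split => // A nA; exact: nbhs_singleton nA.
  move: (Bz) => [dz ngz]; move: dz; rewrite /pdom /=.
  case E0 : (b z) => [e|] // _.
  have : ~ forall (nu : set_system X) (hnu : UltraFilter nu) (h : ulim nu id z),
      proj1_sig (sigma hnu h e) b.
    by move=> hall; apply: ngz; exists e; split.
  move=> nall; apply: contrapT => nex; apply: nall => nu hnu h; apply: contrapT => nm.
  apply: nex; exists nu; split => //; split => // _; exists e; split => //.
  by exists hnu, h.
pose nuz (z : X) := proj1_sig (cid (spec z)).
have hnuz : forall z, UltraFilter (nuz z).
  by move=> z; have [? _] := proj2_sig (cid (spec z)).
have hsz : forall z, ulim (nuz z) id (id z).
  by move=> z; have [_ [? _]] := proj2_sig (cid (spec z)).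
have bz : forall z, B z -> exists e, b z = Some e /\ exists (hU' : UltraFilter (nuz z))
    (h' : ulim (nuz z) id z), ~ proj1_sig (sigma hU' h' e) b.
  by move=> z; have [_ [_ ?]] := proj2_sig (cid (spec z)).
have hUi : UltraFilter (uint Mu nuz) := uint_ultra UMu hnuz.
have h1 : ulim (uint Mu nuz) id x.
  move=> A nA; have [O [oO [Ox OA]]] := nbhs_open_sub nA.
  rewrite /uint /=; apply: filterS (ulim_open hMu oO Ox) => z /= Oz.
  by apply: filterS (ulim_open (hsz z) oO Oz) => t /= Ot; exact: OA.
have E := sigma_assoc UMu hnuz hUi hsz hMu h1 a.
have dbMu : Mu (pdom b) by apply: filterS BMu => z [].
have vbM := vb Mu UMu hMu dbMu.
have := umap_mem FMu (fun z c => sigma (hnuz z) (hsz z) c) (proj2_sig _) vbM.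
rewrite -E => -[b' [Cb' hm]].
have vbU := vb _ hUi h1 (h1 _ nb).
have hab := class_agree2 (ufilter hUi) (proj2_sig _) vbU Cb'.
have hab' : Mu [set z | nuz z [set t | b t <> None /\ b t = b' t]] := hab.
have : Mu set0.
  apply: filterS (filterI (filterI hm hab') BMu) => z [[[c [ec mc]] hz] Bz].
  have [e [be [hU' [h' nm]]]] := bz z Bz.
  move: ec; rewrite /fmapp be => -[ec]; subst c.
  apply: nm; rewrite (sigma_irr erefl hU' (hnuz z) h' (hsz z)).
  apply: (class_agree (ufilter (hnuz z)) (proj2_sig (sigma (hnuz z) (hsz z) e)) mc).
  exact: (uagree_sym (ufilter (hnuz z)) hz).
move=> h0; exact: (@filter_not_empty _ Mu (@ultra_proper _ _ UMu) h0).
Qed.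

Lemma loc_sect : exists U : opens X, proj1_sig U x /\
  exists s : secG F U, forall hx : proj1_sig U x, proj1_sig s x hx = a.
Proof.
have [b [vb nb]] := claimZ.
have bx := valid_at vb nb.
have [N [nN gN]] := extension vb nb.
have nNb : nbhs x (N `&` pdom b) by apply: filterI.
pose U0 : opens X := exist _ _ (open_interior (N `&` pdom b)).
have gU : forall y, proj1_sig U0 y -> good b y.
  by move=> y hy; apply: gN; have [] := interior_subset hy.
pose s0 := fun y (hy : proj1_sig U0 y) => proj1_sig (cid (gU y hy)).
have s0b : forall y hy, b y = Some (s0 y hy).
  by move=> y hy; exact: (proj1 (proj2_sig (cid (gU y hy)))).
have s0v : forall y hy (nu : set_system X) (hnu : UltraFilter nu) (h : ulim nu id y),
    proj1_sig (sigma hnu h (s0 y hy)) b.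
  by move=> y hy; exact: (proj2 (proj2_sig (cid (gU y hy)))).
have cs : compat s0.
  move=> S mu hU xs y hy h.
  have m := sig_push hU h (fun hU' h' => s0v y hy _ hU' h').
  apply: (class_agree (ufilter hU) (proj2_sig _) m).
  apply: filterS (ulim_open h (proj2_sig U0) hy) => i hi.
  by rewrite /= (fam_in s0 hi) s0b.
exists U0; split; first exact: nbhs_singleton (nbhs_interior nNb).
exists (exist _ s0 cs) => hx /=.
by move: bx; rewrite s0b => -[].
Qed.

End LocSect.


Section IsoLU.
Variables (X : topologicalType) (F : left_ultrafunctor X).

Definition ev (x : X) (g : stalk (sheafG F) x) : LUF F x :=
  proj1_sig (gs (rep g)) x (gx (rep g)).

Lemma ev_germ (x : X) (U : opens X) (hx : proj1_sig U x) (s : secG F U) :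
  ev (germ (GP (P := sheafG F) hx s)) = proj1_sig s x hx.
Proof.
have := germ_rep (germ (GP (P := sheafG F) hx s)); move/esym/germ_eq.
move=> [W [Wx [h1 [h2 e]]]].
have := congr1 (fun r : secG F W => proj1_sig r x Wx) e; rewrite /= /ev => e'.
rewrite (Prop_irrelevance (gx _) (h1 x Wx)) e'.
by congr (proj1_sig s x); exact: Prop_irrelevance.
Qed.

Lemma ev_hom (S : Type) (mu : set_system S) (hU : UltraFilter mu) (xs : S -> X) (x : X)
  (h : ulim mu xs x) (g : stalk (sheafG F) x) :
  umap_set mu (fun s => @ev (xs s)) (proj1_sig (sig_st hU h g)) =
  proj1_sig (sigma hU h (ev g)).
Proof.
have Fm := ufilter hU.
have eg := germ_rep_eta g.
rewrite (sig_st_rep hU h eg) (umap_class Fm _ (Pfam_mdef _ Fm h (gx (rep g)))).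
have m := proj2_sig (gs (rep g)) S mu hU xs x (gx (rep g)) h.
rewrite (mem_class Fm (proj2_sig _) m); congr class_of.
apply: functional_extensionality_dep => i; rewrite /fmapp /Pfam /fam.
by case: pselect => // hi; rewrite ev_germ.
Qed.

Definition evLU : LU_hom (stalkLU (sheafG F)) F := exist _ ev ev_hom.

Lemma sect_agree (U1 U2 : opens X) (s1 : secG F U1) (s2 : secG F U2) (x : X)
  (h1 : proj1_sig U1 x) (h2 : proj1_sig U2 x) :
  proj1_sig s1 x h1 = proj1_sig s2 x h2 ->
  exists N, nbhs x N /\ forall z (a : proj1_sig U1 z) (b : proj1_sig U2 z), N z ->
    proj1_sig s1 z a = proj1_sig s2 z b.
Proof.
move=> e; apply: contrapT => H.
pose B := [set z | exists (a : proj1_sig U1 z) (b : proj1_sig U2 z),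
  proj1_sig s1 z a <> proj1_sig s2 z b].
have hB : forall N, nbhs x N -> exists z, N z /\ B z.
  move=> N nN; apply: contrapT => hn; apply: H; exists N; split => //.
  move=> z a b Nz; apply: contrapT => ne; apply: hn; exists z; split => //.
  by exists a, b.
have [nu [Unu [hnu Bnu]]] := ultra_nbhs hB.
have Fn := ufilter Unu.
have m1 := proj2_sig s1 X nu Unu id x h1 hnu.
have m2 := proj2_sig s2 X nu Unu id x h2 hnu.
rewrite e in m1.
have hag := class_agree2 Fn (proj2_sig _) m1 m2.
have : nu set0.
  apply: filterS (filterI hag Bnu) => z [[_ e1] [a [b ne]]]; apply: ne.
  move: e1; rewrite (fam_in (xs := id) (i := z) _ a) (fam_in (xs := id) (i := z) _ b).
  by move=> [].
move=> h0; exact: (@filter_not_empty _ nu (@ultra_proper _ _ Unu) h0).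
Qed.

Definition invU (x : X) (a : LUF F x) : opens X := proj1_sig (cid (loc_sect a)).
Lemma invU_x (x : X) (a : LUF F x) : proj1_sig (invU a) x.
Proof. exact: (proj1 (proj2_sig (cid (loc_sect a)))). Qed.
Definition invs (x : X) (a : LUF F x) : secG F (invU a) :=
  proj1_sig (cid (proj2 (proj2_sig (cid (loc_sect a))))).
Lemma invs_spec (x : X) (a : LUF F x) hx : proj1_sig (invs a) x hx = a.
Proof. exact: (proj2_sig (cid (proj2 (proj2_sig (cid (loc_sect a)))))). Qed.

Definition invL (x : X) (a : LUF F x) : stalk (sheafG F) x :=
  germ (GP (P := sheafG F) (invU_x a) (invs a)).

Lemma ev_inv (x : X) (a : LUF F x) : ev (invL a) = a.
Proof. by rewrite /invL ev_germ invs_spec. Qed.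

Lemma inv_ev (x : X) (g : stalk (sheafG F) x) : invL (ev g) = g.
Proof.
rewrite [in RHS](germ_rep_eta g) /invL; apply/germ_eq.
set U := gU (rep g); set s := gs (rep g); set hx := gx (rep g).
have hx0 := @invU_x x (ev g).
have [N [nN HN]] := sect_agree (@invs_spec x (ev g) hx0 :
  proj1_sig (invs (ev g)) x hx0 = proj1_sig s x hx).
have nW : nbhs x (N `&` proj1_sig (invU (ev g)) `&` proj1_sig U).
  apply: filterI; first apply: filterI => //.
  - exact: open_nbhs_nbhs (conj (proj2_sig (invU (ev g))) hx0).
  - exact: open_nbhs_nbhs (conj (proj2_sig U) hx).
pose W : opens X := exist _ _ (open_interior (N `&` proj1_sig (invU (ev g)) `&` proj1_sig U)).
have W1 : proj1_sig W `<=` proj1_sig (invU (ev g)) by move=> z /interior_subset [[]].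
have W2 : proj1_sig W `<=` proj1_sig U by move=> z /interior_subset [].
exists W; split; first exact: nbhs_singleton (nbhs_interior nW).
exists W1, W2; apply: secG_eq => z hz /=; apply: HN.
by have [[]] := interior_subset hz.
Qed.

Lemma inv_hom (S : Type) (mu : set_system S) (hU : UltraFilter mu) (xs : S -> X) (x : X)
  (h : ulim mu xs x) (a : LUF F x) :
  umap_set mu (fun s => @invL (xs s)) (proj1_sig (sigma hU h a)) =
  proj1_sig (sig_st hU h (invL a)).
Proof.
have Fm := ufilter hU.
transitivity (umap_set mu (fun s => @invL (xs s)) (proj1_sig (sigma hU h (ev (invL a))))).
  by rewrite ev_inv.
rewrite -ev_hom umap_comp_class //; last exact: (proj2_sig _).
have -> : (fun s (b : stalk (sheafG F) (xs s)) => invL (ev b)) = (fun s b => b).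
  by apply: functional_extensionality_dep => s; apply: funext => b; exact: inv_ev.
by rewrite umap_id_class //; exact: (proj2_sig _).
Qed.

Definition invLU : LU_hom F (stalkLU (sheafG F)) := exist _ invL inv_hom.

End IsoLU.

Lemma isoLU (X : topologicalType) :
  @nat_iso (LeftUlt X) (LeftUlt X) (fun a => fob (FunF X) (fob (FunG X) a))
      (@idFunctor_ob (LeftUlt X))
      (fun a b f => fhom (FunF X) (fhom (FunG X) f)) (fun a b f => f).
Proof.
exists (@evLU X), (@invLU X); split; [|split].
- move=> F; apply: LU_hom_eq; apply: functional_extensionality_dep => x.
  by apply: funext => a /=; exact: ev_inv.
- move=> F; apply: LU_hom_eq; apply: functional_extensionality_dep => x.
  by apply: funext => g /=; exact: inv_ev.
- move=> F G al; apply: LU_hom_eq; apply: functional_extensionality_dep => x.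
  apply: funext => g /=; rewrite /smap ev_germ //.
Qed.

Lemma part3 (X : topologicalType) : cat_equivalent (Sh X) (LeftUlt X).
Proof. exists (FunF X), (FunG X); split; [exact: isoSh | exact: isoLU]. Qed.

Unset Implicit Arguments.

Theorem mainTheorem20 (X : topologicalType) :
  compact [set: X] -> hausdorff_space X ->
  (* bundles with discrete fibre metric bounded by 1 = etale spaces *)
  (forall (E : topologicalType) (pi : E -> X),
     (forall x : X, exists e : E, pi e = x) ->
     (is_bundle pi (@discrete_dist E) 1 <-> local_homeomorphism pi)) /\
  (* their morphisms are exactly the continuous maps over X *)
  (forall (E E' : topologicalType) (pi : E -> X) (pi' : E' -> X),
     is_bundle pi (@discrete_dist E) 1 -> is_bundle pi' (@discrete_dist E') 1 ->
     forall f : E -> E',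
       is_bundle_morphism pi pi' (@discrete_dist E) (@discrete_dist E') f <->
       (continuous f /\ forall e : E, pi' (f e) = pi e)) /\
  (* Sh(X) is equivalent to LeftUlt(X, Set) *)
  cat_equivalent (Sh X) (LeftUlt X).
Proof.
move=> _ _; split.
  move=> E pi surj; split; [exact: bundle_etale | exact: etale_bundle].
split; last exact: part3.
move=> E E' pi pi' _ _ f; exact: part2.
Qed.
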